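(* Consider a collective decentralized POMDP (CDec-POMDP) with $M$ agents, finite local state space $S$, finite action set $A$, horizon $H$, initial local-state distribution $b_o$, transition functions $\phi_t(i'\mid i,j,\mathbf{n}_{\mathbf{s}_t})$, count-based observations $o(i,\mathbf{n}_{\mathbf{s}_t})$, local rewards $r_t(i,j,\mathbf{n}_{\mathbf{s}_t})$, and a homogeneous parameterized policy $\pi_t(j\mid i,o(i,\mathbf{n}_{\mathbf{s}_t}))$ with parameter vector $\theta$ (all as described in the context). Then $$\nabla_\theta V_1(\pi)=\sum_{t=1}^H \mathbb{E}_{\mathbf{s}_t,\mathbf{a}_t\mid b_o,\pi}\Big[Q^\pi_t(\mathbf{s}_t,\mathbf{a}_t)\sum_{i\in S,\,j\in A} n_t(i,j)\,\nabla_\theta\log\pi_t\big(j\mid i,o(i,\mathbf{n}_{\mathbf{s}_t})\big)\Big].$$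
   Context: CDec-POMDP: there are $M$ agents; each agent $m$ has a local state $s^m_t\in S$ and action $a^m_t\in A$ at each time $t=1,\dots,H$. The joint state and joint action are $\mathbf{s}_t=(s^1_t,\dots,s^M_t)$, $\mathbf{a}_t=(a^1_t,\dots,a^M_t)$. Counts: $n_t(i)=|\{m: s^m_t=i\}|$, $n_t(i,j)=|\{m:(s^m_t,a^m_t)=(i,j)\}|$, $n_t(i,j,i')=|\{m:(s^m_t,a^m_t,s^m_{t+1})=(i,j,i')\}|$; the count table $\mathbf{n}_{\mathbf{s}_t}=(n_t(i))_{i\in S}$. Initial local states are drawn i.i.d. from $b_o$. At time $t$, an agent in state $i$ observes $(i,o(i,\mathbf{n}_{\mathbf{s}_t}))$ for a fixed observation function $o$, and all agents independently choose actions according to the common policy $\pi_t(j\mid i,o(i,\mathbf{n}_{\mathbf{s}_t}))$, which is differentiable in $\theta$ with positive probabilities. Each agent then independently moves to $i'$ with probability $\phi_t(i'\mid i,j,\mathbf{n}_{\mathbf{s}_t})$ and receives reward $r_t(i,j,\mathbf{n}_{\mathbf{s}_t})$. The joint reward is $r_t(\mathbf{s}_t,\mathbf{a}_t)=\sum_{m=1}^M r_t(s^m_t,a^m_t,\mathbf{n}_{\mathbf{s}_t})$. The action-value function is defined by $Q^\pi_H(\mathbf{s}_H,\mathbf{a}_H)=r_H(\mathbf{s}_H,\mathbf{a}_H)$ and $Q^\pi_t(\mathbf{s}_t,\mathbf{a}_t)=r_t(\mathbf{s}_t,\mathbf{a}_t)+\sum_{\mathbf{s}_{t+1},\mathbf{a}_{t+1}}P^\pi(\mathbf{s}_{t+1},\mathbf{a}_{t+1}\mid\mathbf{s}_t,\mathbf{a}_t)Q^\pi_{t+1}(\mathbf{s}_{t+1},\mathbf{a}_{t+1})$,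 and $V_1(\pi)=\mathbb{E}_{\mathbf{s}_1,\mathbf{a}_1\mid b_o,\pi}[Q^\pi_1(\mathbf{s}_1,\mathbf{a}_1)]=\sum_{m=1}^M\sum_{t=1}^H\mathbb{E}[r_t(s^m_t,a^m_t,\mathbf{n}_{\mathbf{s}_t})]$. The expectation $\mathbb{E}_{\mathbf{s}_t,\mathbf{a}_t\mid b_o,\pi}$ is over the marginal distribution of $(\mathbf{s}_t,\mathbf{a}_t)$ under this process, and $n_t(i,j)$ inside it is the count induced by $(\mathbf{s}_t,\mathbf{a}_t)$. *)

(* Defs.v *)
From HB Require Import structures.
From mathcomp Require Import all_boot all_order all_algebra.
From mathcomp Require Import all_classical all_reals all_analysis.
Set Implicit Arguments. Unset Strict Implicit. Unset Printing Implicit Defensive.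
Import Order.TTheory GRing.Theory Num.Theory.
Import numFieldNormedType.Exports.
Local Open Scope ring_scope.

(* Times t = 1..H (nat).
   Conventions for the primitive data:
     b0 i                     = b_o(i)
     phi t i j n i'           = phi_t(i' | i, j, n)
     r t i j n                = r_t(i, j, n)
     o i n                    = o(i, n)
     pi theta t i ob j        = pi_t(j | i, ob)   (parameter theta)          *)

Section CDec.
Variables (R : realType) (S A : finType) (Ob : Type) (M H d : nat).
Variable b0 : S -> R.
Variable phi : nat -> S -> A -> {ffun S -> nat} -> S -> R.
Variable r : nat -> S -> A -> {ffun S -> nat} -> R.
Variable o : S -> {ffun S -> nat} -> Ob.
Variable pi : 'rV[R]_d -> nat -> S -> Ob -> A -> R.

Definition jstate := {ffun 'I_M -> S}.
Definition jaction := {ffun 'I_M -> A}.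

Definition cnt (s : jstate) : {ffun S -> nat} :=
  [ffun i => #|[set m | s m == i]|].
Definition cnt2 (s : jstate) (a : jaction) (i : S) (j : A) : nat :=
  #|[set m | (s m == i) && (a m == j)]|.

Definition jrew (t : nat) (s : jstate) (a : jaction) : R :=
  \sum_(m < M) r t (s m) (a m) (cnt s).

Definition jpol (theta : 'rV[R]_d) (t : nat) (s : jstate) (a : jaction) : R :=
  \prod_(m < M) pi theta t (s m) (o (s m) (cnt s)) (a m).

Definition jtrans (theta : 'rV[R]_d) (t : nat) (s : jstate) (a : jaction)
  (s' : jstate) (a' : jaction) : R :=
  (\prod_(m < M) phi t (s m) (a m) (cnt s) (s' m)) * jpol theta t.+1 s' a'.

(* Q^pi via k remaining steps: Qrec k t = Q_t when k = H - t *)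
Fixpoint Qrec (theta : 'rV[R]_d) (k t : nat) (s : jstate) (a : jaction) : R :=
  jrew t s a +
  match k with
  | 0 => 0
  | k'.+1 => \sum_(s' : jstate) \sum_(a' : jaction)
               jtrans theta t s a s' a' * Qrec theta k' t.+1 s' a'
  end.

Definition Q (theta : 'rV[R]_d) (t : nat) (s : jstate) (a : jaction) : R :=
  Qrec theta (H - t) t s a.

(* marginal distribution of (s_{k+1}, a_{k+1}) *)
Fixpoint margk (theta : 'rV[R]_d) (k : nat) (s : jstate) (a : jaction) : R :=
  match k with
  | 0 => (\prod_(m < M) b0 (s m)) * jpol theta 1 s a
  | k'.+1 => \sum_(s0 : jstate) \sum_(a0 : jaction)
               margk theta k' s0 a0 * jtrans theta k'.+1 s0 a0 s a
  end.

(* P(s_t = s, a_t = a | b_o, pi), for t >= 1 *)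
Definition marg (theta : 'rV[R]_d) (t : nat) (s : jstate) (a : jaction) : R :=
  margk theta t.-1 s a.

Definition Expect (theta : 'rV[R]_d) (t : nat) (f : jstate -> jaction -> R) : R :=
  \sum_(s : jstate) \sum_(a : jaction) marg theta t s a * f s a.

Definition V1 (theta : 'rV[R]_d) : R := Expect theta 1 (Q theta 1).

End CDec.

Definition ecoord (R : realType) (d : nat) (k : 'I_d) : 'rV[R]_d := delta_mx 0 k.
Arguments ecoord : clear implicits.

(* Main.v *)
Require Import Defs.
From HB Require Import structures.
From mathcomp Require Import all_boot all_order all_algebra.
From mathcomp Require Import all_classical all_reals all_analysis.
From mathcomp Require Import ring lra.
Import Order.TTheory GRing.Theory Num.Theory.
Import numFieldNormedType.Exports.
Local Open Scope ring_scope.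

Section Helpers.
Context {R : realType} {d : nat}.
Let V := 'rV[R]_d.
Implicit Types (f g : V -> R) (x v : V).

Lemma isd_ext {f g x v df} : (forall th, f th = g th) -> is_derive x v f df -> is_derive x v g df.
Proof. by move=> e; have -> : f = g by apply: funext. Qed.

Lemma isd_eq {f g x v df dg} : (forall th, f th = g th) -> df = dg ->
  is_derive x v f df -> is_derive x v g dg.
Proof. by move=> e <-; apply: isd_ext. Qed.

Lemma isd_cst (c : R) x v : is_derive x v (fun _ : V => c) 0.
Proof. exact: is_derive_cst. Qed.

Lemma isd_add {f g x v df dg} : is_derive x v f df -> is_derive x v g dg ->
  is_derive x v (fun th => f th + g th) (df + dg).
Proof. move=> ? ?; exact: is_deriveD. Qed.

Lemma isd_mul {f g x v df dg} : is_derive x v f df -> is_derive x v g dg ->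
  is_derive x v (fun th => f th * g th) (df * g x + f x * dg).
Proof.
move=> h1 h2; have := @is_deriveM R V f g x v df dg h1 h2.
move=> h.
have h' : is_derive x v (fun th => f th * g th) (f x * dg + g x * df) := h.
apply: (is_derive_eq h').
by rewrite addrC mulrC.
Qed.

Lemma isd_sum (I : Type) (r : seq I) (P : pred I) (h : I -> V -> R) (dh : I -> R) x v :
  (forall i, P i -> is_derive x v (h i) (dh i)) ->
  is_derive x v (fun th => \sum_(i <- r | P i) h i th) (\sum_(i <- r | P i) dh i).
Proof.
move=> hd; elim: r => [|a r IH].
  by under [X in is_derive _ _ X]funext do rewrite big_nil; rewrite big_nil; exact: isd_cst.
under [X in is_derive _ _ X]funext do rewrite big_cons; rewrite big_cons.
case E: (P a); last exact: IH.
apply: isd_add => //; exact: hd.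
Qed.

Lemma isd_prod (I : Type) (r : seq I) (h : I -> V -> R) (dh : I -> R) x v :
  (forall i, is_derive x v (h i) (dh i)) -> (forall i, h i x != 0) ->
  is_derive x v (fun th => \prod_(i <- r) h i th)
     ((\prod_(i <- r) h i x) * \sum_(i <- r) dh i / h i x).
Proof.
move=> hd hn; elim: r => [|a r IH].
  by under [X in is_derive _ _ X]funext do rewrite big_nil; rewrite !big_nil mulr0; exact: isd_cst.
under [X in is_derive _ _ X]funext do rewrite big_cons.
apply: (is_derive_eq (isd_mul (hd a) IH)).
rewrite !big_cons mulrDr; congr (_ + _); last by rewrite mulrA.
by have := hn a; move=> hna; field.
Qed.

Lemma isd_ln f x v : differentiable f x -> 0 < f x ->
  is_derive x v (fun th => ln (f th)) ('D_v f x / f x).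
Proof.
move=> df fp.
have dl : differentiable (@ln R) (f x).
  by apply/derivable1_diffP; apply: ex_derive; apply: is_derive1_ln.
have dc : differentiable ((@ln R) \o f) x by apply: differentiable_comp.
apply: DeriveDef; first exact: diff_derivable.
rewrite (deriveE _ dc) diff_comp // /= deriv1E; last by apply/derivable1_diffP.
rewrite -deriveE // derive1E.
have := @is_derive1_ln R (f x) fp => h. rewrite derive_val.
by [].
Qed.

End Helpers.

Section Main.
Variables (R : realType) (S A : finType) (Ob : Type) (M d : nat).
Variable b0 : S -> R.
Variable phi : nat -> S -> A -> {ffun S -> nat} -> S -> R.
Variable r : nat -> S -> A -> {ffun S -> nat} -> R.
Variable o : S -> {ffun S -> nat} -> Ob.
Variable pi : 'rV[R]_d -> nat -> S -> Ob -> A -> R.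
Hypothesis hpi_pos : forall theta t i ob j, 0 < pi theta t i ob j.
Hypothesis hpi_diff : forall theta t i ob j,
     differentiable (fun th : 'rV[R]_d => pi th t i ob j) theta.
Variables (theta v : 'rV[R]_d).

Local Notation JS := (jstate S M).
Local Notation JA := (jaction A M).

Lemma regroup (F : S -> A -> R) (s : JS) (a : JA) :
  \sum_(m < M) F (s m) (a m) = \sum_i \sum_j (cnt2 s a i j)%:R * F i j.
Proof.
have E : forall i j, (cnt2 s a i j)%:R * F i j =
   \sum_(m < M) (if (s m == i) && (a m == j) then F i j else 0).
  move=> i j; rewrite -big_mkcond /= sumr_const mulr_natl /cnt2.
  congr (_ *+ _); apply: eq_card => m; by rewrite inE.
under [RHS]eq_bigr do under eq_bigr do rewrite E.
under [RHS]eq_bigr do rewrite exchange_big.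
rewrite exchange_big /=; apply: eq_bigr => m _.
rewrite (bigD1 (s m)) //= [X in _ + X]big1 ?addr0; last first.
  move=> i ne; apply: big1 => j _; by rewrite eq_sym (negbTE ne).
rewrite (bigD1 (a m)) //= !eqxx /= [X in _ + X]big1 ?addr0 //.
by move=> j ne; rewrite eq_sym (negbTE ne).
Qed.

Definition sc (t : nat) (s : JS) (a : JA) : R :=
  \sum_(i : S) \sum_(j : A) (cnt2 s a i j)%:R *
     'D_v (fun th : 'rV[R]_d => ln (pi th t i (o i (cnt s)) j)) theta.

Lemma jpol_der t s a :
  is_derive theta v (fun th => jpol o pi th t s a) (jpol o pi theta t s a * sc t s a).
Proof.
rewrite /jpol.
pose h := fun (m : 'I_M) (th : 'rV[R]_d) => pi th t (s m) (o (s m) (cnt s)) (a m).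
have hd : forall m, is_derive theta v (h m) ('D_v (h m) theta).
  move=> m; apply: derivableP; apply: diff_derivable; exact: hpi_diff.
have hn : forall m, h m theta != 0 by move=> m; rewrite gt_eqF // /h.
have hh := @isd_prod _ _ _ (index_enum _) _ _ _ _ hd hn. apply: (is_derive_eq hh).
congr (_ * _).
rewrite /sc -(regroup (fun i j => 'D_v (fun th : 'rV[R]_d => ln (pi th t i (o i (cnt s)) j)) theta)).
apply: eq_bigr => m _.
have := isd_ln _ _ v (hpi_diff theta t (s m) (o (s m) (cnt s)) (a m)) (hpi_pos _ _ _ _ _).
by move=> hl; rewrite (@derive_val _ _ _ _ _ _ _ hl).
Qed.


Lemma jtrans_der t s a s' a' :
  is_derive theta v (fun th => jtrans phi o pi th t s a s' a')
    (jtrans phi o pi theta t s a s' a' * sc t.+1 s' a').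
Proof.
rewrite /jtrans.
apply: (is_derive_eq (isd_mul (isd_cst _ theta v) (jpol_der t.+1 s' a'))).
by rewrite mul0r add0r mulrA.
Qed.

Definition step (mu : 'rV[R]_d -> JS -> JA -> R) (t : nat) : 'rV[R]_d -> JS -> JA -> R :=
  fun th s' a' => \sum_(s : JS) \sum_(a : JA) mu th s a * jtrans phi o pi th t s a s' a'.

Fixpoint prop (l : nat) (mu : 'rV[R]_d -> JS -> JA -> R) (t : nat) :=
  match l with 0 => mu | l'.+1 => prop l' (step mu t) t.+1 end.

Lemma propS l : forall mu t, prop l.+1 mu t = step (prop l mu t) (t + l).
Proof.
elim: l => [|l IH] mu t; first by rewrite addn0.
change (prop l.+1 (step mu t) t.+1 = step (prop l.+1 mu t) (t + l.+1)).
by rewrite IH addSn addnS.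
Qed.

Lemma xch (f : JS -> JA -> R) (K : JS -> JA -> JS -> JA -> R) (q : JS -> JA -> R) :
  \sum_(s : JS) \sum_(a : JA) f s a * (\sum_(s' : JS) \sum_(a' : JA) K s a s' a' * q s' a') =
  \sum_(s' : JS) \sum_(a' : JA) (\sum_(s : JS) \sum_(a : JA) f s a * K s a s' a') * q s' a'.
Proof.
rewrite pair_big [RHS]pair_big /=.
under eq_bigr => p _ do rewrite pair_big /=.
under [RHS]eq_bigr => p _ do rewrite pair_big /=.
under eq_bigr do rewrite mulr_sumr.
rewrite exchange_big; apply: eq_bigr => p' _; rewrite mulr_suml.
by apply: eq_bigr => p _; rewrite mulrA.
Qed.


Local Notation QR := (Qrec phi r o pi).

Lemma step_der (mu : 'rV[R]_d -> JS -> JA -> R) (dmu : JS -> JA -> R) (t : nat) :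
  (forall s a, is_derive theta v (fun th => mu th s a) (dmu s a)) ->
  forall s' a', is_derive theta v (fun th => step mu t th s' a')
    (\sum_(s : JS) \sum_(a : JA) dmu s a * jtrans phi o pi theta t s a s' a'
       + step mu t theta s' a' * sc t.+1 s' a').
Proof.
move=> hmu s' a'; rewrite /step.
apply: is_derive_eq.
  apply: isd_sum => s _; apply: isd_sum => a _.
  exact: (isd_mul (hmu s a) (jtrans_der t s a s' a')).
rewrite mulr_suml -big_split; apply: eq_bigr => s _.
rewrite mulr_suml -big_split; apply: eq_bigr => a _.
by rewrite !mulrA.
Qed.

Lemma key (n : nat) : forall (t : nat) (mu : 'rV[R]_d -> JS -> JA -> R) (dmu : JS -> JA -> R),
  (forall s a, is_derive theta v (fun th => mu th s a) (dmu s a)) ->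
  is_derive theta v (fun th => \sum_(s : JS) \sum_(a : JA) mu th s a * QR th n t s a)
   (\sum_(s : JS) \sum_(a : JA) dmu s a * QR theta n t s a +
    \sum_(l < n) \sum_(s : JS) \sum_(a : JA)
        prop l.+1 mu t theta s a * QR theta (n - l.+1) (t + l.+1) s a * sc (t + l.+1) s a).
Proof.
elim: n => [|n IH] t mu dmu hmu.
  rewrite big_ord0 addr0.
  apply: isd_sum => s _; apply: isd_sum => a _.
  have h1 := isd_mul (hmu s a) (isd_cst (QR theta 0 t s a) theta v).
  apply: (isd_eq _ _ h1) => //.
  by rewrite mulr0 addr0.
pose dst := fun s' a' => \sum_(s : JS) \sum_(a : JA) dmu s a * jtrans phi o pi theta t s a s' a'
       + step mu t theta s' a' * sc t.+1 s' a'.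
have hst := step_der mu dmu t hmu.
have h2 := IH t.+1 (step mu t) dst hst.
have h1 : is_derive theta v (fun th => \sum_(s : JS) \sum_(a : JA) mu th s a * jrew r t s a)
    (\sum_(s : JS) \sum_(a : JA) dmu s a * jrew r t s a).
  apply: isd_sum => s _; apply: isd_sum => a _.
  have h1 := isd_mul (hmu s a) (isd_cst (jrew r t s a) theta v).
  apply: (isd_eq _ _ h1) => //.
  by rewrite mulr0 addr0.
apply: (isd_eq _ _ (isd_add h1 h2)).
  move=> th /=; rewrite /step -xch -big_split; apply: eq_bigr => s _.
  rewrite -big_split; apply: eq_bigr => a _; by rewrite mulrDr.
have E1 : \sum_(s : JS) \sum_(a : JA) dmu s a * QR theta n.+1 t s a =
   \sum_(s : JS) \sum_(a : JA) dmu s a * jrew r t s a +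
   \sum_(s' : JS) \sum_(a' : JA) (\sum_(s : JS) \sum_(a : JA) dmu s a * jtrans phi o pi theta t s a s' a') * QR theta n t.+1 s' a'.
  rewrite -xch -big_split; apply: eq_bigr => s _.
  rewrite -big_split; apply: eq_bigr => a _; by rewrite /= -mulrDr.
have E2 : \sum_(s : JS) \sum_(a : JA) dst s a * QR theta n t.+1 s a =
   \sum_(s' : JS) \sum_(a' : JA) (\sum_(s : JS) \sum_(a : JA) dmu s a * jtrans phi o pi theta t s a s' a') * QR theta n t.+1 s' a'
   + \sum_(s : JS) \sum_(a : JA) step mu t theta s a * QR theta n t.+1 s a * sc t.+1 s a.
  rewrite -big_split; apply: eq_bigr => s _.
  rewrite -big_split; apply: eq_bigr => a _; by rewrite /dst mulrDl mulrAC.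
rewrite big_ord_recl /= E1 E2 subSS subn0 addn1.
rewrite !addrA; congr (_ + _).
apply: eq_bigr => i _; by rewrite subSS [in RHS]addnS -[in RHS]addSn.
Qed.

Lemma prop_marg l : prop l (fun th => margk b0 phi o pi th 0) 1 = fun th => margk b0 phi o pi th l.
Proof. elim: l => [|l IH] //; by rewrite propS IH add1n. Qed.

Lemma mu0_der s a : is_derive theta v (fun th => margk b0 phi o pi th 0 s a)
   (margk b0 phi o pi theta 0 s a * sc 1 s a).
Proof.
have h := isd_mul (isd_cst (\prod_(m < M) b0 (s m)) theta v) (jpol_der 1 s a).
apply: (isd_eq _ _ h) => //.
by rewrite mul0r add0r mulrA.
Qed.

Lemma main_sec (H : nat) : (1 <= H)%N ->
  'D_v (V1 M H b0 phi r o pi) theta =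
  \sum_(1 <= t < H.+1) Expect b0 phi o pi theta t (fun s a => Q H phi r o pi theta t s a * sc t s a).
Proof.
case: H => // H' _.
have k := key H' 1 (fun th => margk b0 phi o pi th 0) _ mu0_der.
have k2 : is_derive theta v (V1 M H'.+1 b0 phi r o pi) 
   (\sum_(s : JS) \sum_(a : JA) (margk b0 phi o pi theta 0 s a * sc 1 s a) * QR theta H' 1 s a +
    \sum_(l < H') \sum_(s : JS) \sum_(a : JA)
        prop l.+1 (fun th => margk b0 phi o pi th 0) 1 theta s a * QR theta (H' - l.+1) (1 + l.+1) s a * sc (1 + l.+1) s a).
  apply: (isd_eq _ _ k) => // th.
  by rewrite /V1 /Expect /Q subSS subn0.
rewrite (@derive_val _ _ _ _ _ _ _ k2).
rewrite big_add1 big_mkord big_ord_recl.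
congr (_ + _).
  apply: eq_bigr => s _; apply: eq_bigr => a _.
  by rewrite /marg /Q /= subSS subn0 mulrAC mulrA.
apply: eq_bigr => i _; rewrite lift0 /Expect (prop_marg i.+1).
apply: eq_bigr => s _; apply: eq_bigr => a _.
by rewrite /marg /Q /= add1n subSS mulrA.
Qed.

End Main.

Theorem theorem1 (R : realType) (S A : finType) (Ob : Type) (M H d : nat)
  (b0 : S -> R)
  (phi : nat -> S -> A -> {ffun S -> nat} -> S -> R)
  (r : nat -> S -> A -> {ffun S -> nat} -> R)
  (o : S -> {ffun S -> nat} -> Ob)
  (pi : 'rV[R]_d -> nat -> S -> Ob -> A -> R)
  (hH : (1 <= H)%N)
  (hb0_ge0 : forall i, 0 <= b0 i)
  (hb0_sum : \sum_(i : S) b0 i = 1)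
  (hphi_ge0 : forall t i j n i', 0 <= phi t i j n i')
  (hphi_sum : forall t i j n, \sum_(i' : S) phi t i j n i' = 1)
  (hpi_pos : forall theta t i ob j, 0 < pi theta t i ob j)
  (hpi_sum : forall theta t i ob, \sum_(j : A) pi theta t i ob j = 1)
  (hpi_diff : forall theta t i ob j,
     differentiable (fun th : 'rV[R]_d => pi th t i ob j) theta)
  (theta : 'rV[R]_d) :
  forall k : 'I_d,
    'D_(ecoord R d k) (V1 M H b0 phi r o pi) theta =
    \sum_(1 <= t < H.+1)
      @Expect R S A Ob M d b0 phi o pi theta t
        (fun s a =>
           Q H phi r o pi theta t s a *
           \sum_(i : S) \sum_(j : A)
              (cnt2 s a i j)%:R *
              'D_(ecoord R d k)
                 (fun th : 'rV[R]_d => ln (pi th t i (o i (cnt s)) j)) theta).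
Proof.
move=> k.
by apply: main_sec.
Qed.
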